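(* Let $\Phi\colon\mathcal{M}(2;\mathbb{C})\dashrightarrow\mathcal{M}(2;\mathbb{C})$ be a rational map compatible with conjugation. Then $\Phi$ preserves the fibration in $2$-planes $\mathcal{P}$ fiber by fiber, i.e. for generic $\mathrm{M}$, $\Phi(\mathrm{M})\in\mathcal{P}(\mathrm{M})$.
   Context: $\mathcal{C}=\{\lambda\mathrm{Id}:\lambda\in\mathbb{C}\}$. For $\mathrm{M}\in\mathcal{M}(2;\mathbb{C})\setminus\mathcal{C}$, $\mathcal{P}(\mathrm{M})$ is the unique $2$-plane containing $\mathrm{M}$ and $\mathcal{C}$, namely $\{s\mathrm{M}+t\mathrm{Id}\}$ (equivalently the set of matrices commuting with $\mathrm{M}$). $\Phi$ is compatible with conjugation if $\mathrm{A}\Phi(\mathrm{M})\mathrm{A}^{-1}=\Phi(\mathrm{A}\mathrm{M}\mathrm{A}^{-1})$ for all $\mathrm{A}\in\mathrm{GL}(2;\mathbb{C})$ whenever both sides are defined. *)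

(* Defs.v *)
(* C is modelled as R[i] (complex numbers over a real
   closed field) for an arbitrary model R : realType of the real numbers. *)
From mathcomp Require Import all_boot all_algebra.
From mathcomp Require Import reals.
From mathcomp.real_closed Require Import complex.
From mathcomp Require Import mpoly.

Set Implicit Arguments. Unset Strict Implicit. Unset Printing Implicit Defensive.
Local Open Scope ring_scope.

(* coordinates of a 2x2 matrix: (m00, m01, m10, m11) *)
Definition mxcoords (F : nzRingType) (M : 'M[F]_2) : 'I_4 -> F :=
  fun k => M (inord (k %/ 2)) (inord (k %% 2)).

Definition peval (F : comNzRingType) (p : mpoly.mpoly 4 F) (M : 'M[F]_2) : F :=
  mpoly.meval (mxcoords M) p.

(* the rational map Phi = (1/Q) * (P_ij), evaluated at M (meaningful where Q(M) != 0) *)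
Definition ratmap_eval (F : fieldType) (P : 'I_2 -> 'I_2 -> mpoly.mpoly 4 F)
  (Q : mpoly.mpoly 4 F) (M : 'M[F]_2) : 'M[F]_2 :=
  (peval Q M)^-1 *: \matrix_(i, j) peval (P i j) M.

Definition ratmap_defined (F : fieldType) (Q : mpoly.mpoly 4 F) (M : 'M[F]_2) : Prop :=
  peval Q M != 0.

Definition is_scalar (F : nzRingType) (M : 'M[F]_2) : Prop := exists l : F, M = l%:M.

(* N belongs to the 2-plane P(M) = { s M + t Id } *)
Definition in_plane (F : nzRingType) (M N : 'M[F]_2) : Prop :=
  exists s t : F, N = s *: M + t%:M.

Definition compatible_conj (F : fieldType) (P : 'I_2 -> 'I_2 -> mpoly.mpoly 4 F)
  (Q : mpoly.mpoly 4 F) : Prop :=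
  forall (A M : 'M[F]_2), A \in unitmx ->
    ratmap_defined Q M -> ratmap_defined Q (A *m M *m invmx A) ->
    A *m ratmap_eval P Q M *m invmx A = ratmap_eval P Q (A *m M *m invmx A).

(* Main.v *)
Require Import Defs.
From mathcomp Require Import all_boot all_algebra.
From mathcomp Require Import reals.
From mathcomp.real_closed Require Import complex.
From mathcomp Require Import mpoly.
From mathcomp Require Import ring.
Local Open Scope ring_scope.
Import GRing.Theory Num.Theory.

Lemma ord2 (i : 'I_2) : i = 0 \/ i = 1.
Proof. case: i => [[|[|//]]] Hi; [left|right]; exact: val_inj. Qed.

Lemma commute_plane (F : fieldType) (M N : 'M[F]_2) :
  M 0 1 != 0 -> M *m N = N *m M -> in_plane M N.
Proof.
move=> Hb HMN.
have E : forall i j, (M *m N) i j = (N *m M) i j by move=> i j; rewrite HMN.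
have E00 := E 0 0; have E01 := E 0 1.
rewrite !mxE !big_ord_recl !big_ord0 in E00 E01.
rewrite /= !addr0 in E00 E01.
exists (N 0 1 / M 0 1), (N 0 0 - N 0 1 / M 0 1 * M 0 0).
apply/matrixP => i j; rewrite !mxE.
have l1 : lift 0 (0 : 'I_1) = (1 : 'I_2) by exact: val_inj.
rewrite ?l1 in E00 E01.
have o0 : ord0 = (0:'I_2) by exact: val_inj.
rewrite ?o0 in E00 E01.
have n01 : ((0:'I_2) == 1) = false by [].
have n10 : ((1:'I_2) == 0) = false by [].
have hs : N 0 1 / M 0 1 * M 0 1 = N 0 1 by rewrite divfK.
move: hs E00 E01; set s := N 0 1 / M 0 1 => hs E00 E01.
case: (ord2 i) => ->; case: (ord2 j) => ->; rewrite ?eqxx ?n01 ?n10 ?mulr1n ?mulr0n ?addr0.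
- by rewrite addrC subrK.
- by rewrite hs.
- apply: (mulIf Hb). rewrite mulrAC hs.
  rewrite [M 0 0 * _]mulrC in E00. apply: (addrI (N 0 0 * M 0 0)). by rewrite [N 1 0 * _]mulrC E00.
- apply: (mulIf Hb). rewrite mulrDl mulrBl [_ * M 1 1 * _]mulrAC hs [_ * M 0 0 * _]mulrAC hs.
  move: E01. move: (M 0 0) (M 0 1) (M 1 1) (N 0 0) (N 0 1) (N 1 1) => a b d x y w E1.
  rewrite mulrC. apply: (addrI (a * y)). rewrite E1 [y * a]mulrC; ring.
Qed.

Lemma det2 (R : comNzRingType) (A : 'M[R]_2) : \det A = A 0 0 * A 1 1 - A 0 1 * A 1 0.
Proof.
rewrite (expand_det_row A 0) !big_ord_recl big_ord0 /cofactor !det_mx11 !mxE /=.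
have e1 : lift 0 (0:'I_1) = (1:'I_2) by exact: val_inj.
have e2 : lift ord0 (0:'I_1) = (1:'I_2) by exact: val_inj.
have e0 : ord0 = (0:'I_2) by exact: val_inj.
have e3 : lift (1:'I_2) (0:'I_1) = (0:'I_2) by exact: val_inj.
rewrite e0 e1 e3 expr0 expr1 addr0 !mul1r mulN1r mulrN.
by [] || reflexivity.
Qed.
Lemma exists_inv (F : numFieldType) (M : 'M[F]_2) : exists x : F, \det (x%:M - M) != 0.
Proof.
have f : forall x : F, \det (x%:M - M) = (x - M 0 0) * (x - M 1 1) - M 0 1 * M 1 0.
  move=> x; rewrite det2 !mxE /=.
  have n01 : ((0:'I_2) == 1) = false by [].
  have n10 : ((1:'I_2) == 0) = false by [].
  by rewrite !mulr1n !mulr0n !sub0r mulrNN.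
have [h0|h0] := eqVneq (\det (0%:M - M)) 0; last by exists 0.
have [h1|h1] := eqVneq (\det (1%:M - M)) 0; last by exists 1.
have [h2|h2] := eqVneq (\det (2%:M - M)) 0; last by exists 2.
rewrite !f in h0 h1 h2.
move: h0 h1 h2; move: (M 0 0) (M 1 1) (M 0 1) (M 1 0) => a d b c h0 h1 h2.
have e : (2:F) = ((2 - a)*(2-d) - b * c) - 2 * ((1-a)*(1-d) - b * c) + ((0-a)*(0-d) - b * c) by ring.
rewrite h0 h1 h2 mulr0 subr0 addr0 in e.
by move/eqP: e; rewrite pnatr_eq0.
Qed.

Theorem proposition2p16 (R : realType)
  (P : 'I_2 -> 'I_2 -> mpoly.mpoly 4 R[i]) (Q : mpoly.mpoly 4 R[i]) :
  Q != 0 ->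
  compatible_conj P Q ->
  exists G : mpoly.mpoly 4 R[i], G != 0 /\
    forall M : 'M[R[i]]_2, peval G M != 0 ->
      ~ is_scalar M /\ ratmap_defined Q M /\ in_plane M (ratmap_eval P Q M).
Proof.
move=> HQ Hc.
exists (Q * 'X_(inord 1)); split.
  rewrite mulf_neq0 //; apply/eqP => h.
  have := mevalXU (fun _ => 1 : R[i]) (inord 1 : 'I_4).
  by rewrite h meval0 => /eqP; rewrite eq_sym oner_eq0.
move=> M HG.
have HQM : ratmap_defined Q M.
  by move: HG; rewrite /ratmap_defined /peval mevalM mulf_eq0 negb_or => /andP[].
have Hb : M 0 1 != 0.
  move: HG; rewrite /peval mevalM mevalXU /mxcoords mulf_eq0 negb_or => /andP[_].
  have -> : (inord (val (inord 1 : 'I_4) %/ 2) : 'I_2) = 0 by apply: val_inj; rewrite /= !inordK.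
  by have -> : (inord (val (inord 1 : 'I_4) %% 2) : 'I_2) = 1 by apply: val_inj; rewrite /= !inordK.
split; [|split => //].
  case=> l Hl; move: Hb; rewrite Hl mxE /=. by rewrite mulr0n eqxx.
apply: commute_plane => //.
set N := ratmap_eval P Q M.
have [x Hx] := @exists_inv _ M.
set A := x%:M - M.
have HA : A \in unitmx by rewrite unitmxE unitfE.
have AM : A *m M = M *m A by rewrite /A mulmxBl mulmxBr scalar_mxC.
have AMA : A *m M *m invmx A = M by rewrite AM mulmxK.
have := Hc A M HA HQM; rewrite AMA => /(_ HQM) H.
rewrite -/N in H.
have AN : A *m N = N *m A by rewrite -[N in RHS]H mulmxKV.
move: AN; rewrite /A mulmxBl mulmxBr scalar_mxC => /addrI /oppr_inj.
by [].
Qed.
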